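(* Let $\mathbf A\in\mathbb C^{m\times n}$ with $\operatorname{rank}\mathbf A=r$, where $r<\min\{m,n\}$ or $r=m<n$. Then the projection matrix $\mathbf P=\mathbf A^{+}\mathbf A\in\mathbb C^{n\times n}$ has entries \[ (\mathbf P)_{ij}=\frac{p_{ij}}{d_r(\mathbf A^{*}\mathbf A)},\qquad p_{ij}=\sum_{\beta\in J_{r,n}\{i\}}\left|\left((\mathbf A^{*}\mathbf A)_{.i}(\mathbf d_{.j})\right)^{\beta}_{\beta}\right|,\quad i,j=1,\dots,n,\] where $\mathbf d_{.j}$ is the $j$-th column of $\mathbf A^{*}\mathbf A$.
   Context: $\mathbf A^{+}$ is the Moore–Penrose inverse (unique $\mathbf X$ with $\mathbf A\mathbf X\mathbf A=\mathbf A$, $\mathbf X\mathbf A\mathbf X=\mathbf X$, $(\mathbf A\mathbf X)^{*}=\mathbf A\mathbf X$, $(\mathbf X\mathbf A)^{*}=\mathbf X\mathbf A$). $\mathbf M_{.i}(\mathbf c)$ denotes $\mathbf M$ with its $i$-th column replaced by $\mathbf c$. $J_{r,n}$ is the set of strictly increasing sequences of $r$ elements of $\{1,\dots,n\}$, $J_{r,n}\{i\}=\{\beta\in J_{r,n}:i\in\beta\}$, $\mathbf M^{\beta}_{\beta}$ is the principal submatrix indexed by $\beta$, $|\cdot|$ is the determinant, and $d_r(\mathbf M)=\sum_{\beta\in J_{r,n}}|\mathbf M^{\beta}_{\beta}|$. *)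

(* Defs.v *)
From HB Require Import structures.
From mathcomp Require Import all_boot all_order all_algebra.
Set Implicit Arguments. Unset Strict Implicit. Unset Printing Implicit Defensive.
Import Order.TTheory GRing.Theory Num.Theory.
Local Open Scope ring_scope.

Definition ctmx (C : numClosedFieldType) m n (A : 'M[C]_(m, n)) : 'M[C]_(n, m) :=
  (map_mx (fun z => z^*) A)^T.

Definition is_MP_inverse (C : numClosedFieldType) m n
    (A : 'M[C]_(m, n)) (X : 'M[C]_(n, m)) : Prop :=
  [/\ A *m X *m A = A, X *m A *m X = X,
      ctmx (A *m X) = A *m X & ctmx (X *m A) = X *m A].

(* J_{r,n}: strictly increasing maps 'I_r -> 'I_n (0-based indices). *)
Definition incr_seq r n (f : {ffun 'I_r -> 'I_n}) : bool :=
  [forall k : 'I_r, forall l : 'I_r, (k < l)%N ==> (f k < f l)%N].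

Definition princ_sub (C : numClosedFieldType) r n (M : 'M[C]_n)
    (f : {ffun 'I_r -> 'I_n}) : 'M[C]_r := mxsub f f M.

Definition col_replace (C : numClosedFieldType) m n (M : 'M[C]_(m, n))
    (i : 'I_n) (c : 'cV[C]_m) : 'M[C]_(m, n) :=
  \matrix_(k, l) (if l == i then c k ord0 else M k l).

Definition d_r (C : numClosedFieldType) n (r : nat) (M : 'M[C]_n) : C :=
  \sum_(f : {ffun 'I_r -> 'I_n} | incr_seq f) \det (princ_sub M f).

Definition p_entry (C : numClosedFieldType) m n (r : nat) (A : 'M[C]_(m, n))
    (i j : 'I_n) : C :=
  let D := ctmx A *m A in
  \sum_(f : {ffun 'I_r -> 'I_n} | incr_seq f && (i \in codom f))
     \det (princ_sub (col_replace D i (col j D)) f).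

(* Main.v *)
Require Import Defs.
From mathcomp Require Import all_boot all_order all_algebra all_fingroup.
From mathcomp Require Import zify.
Import GRing.Theory Num.Theory.
Set Implicit Arguments. Unset Strict Implicit.
Local Open Scope ring_scope.

Definition PM (R : pzRingType) n (S : {set 'I_n}) (M : 'M[R]_n) : 'M[R]_n :=
  \matrix_(a, b) if a \in S then (if b \in S then M a b else 0) else (a == b)%:R.
Lemma prod_split (R : comPzRingType) n (J : {set 'I_n}) (M : 'M[R]_n) (x : 'I_n -> R)
   (s : 'S_n) :
  \prod_i (if i \in J then M i (s i) else (i == s i)%:R * x i) =
  (\prod_(a in ~: J) x a) * \prod_i PM J M i (s i).
Proof.
have [hfx|] := boolP [forall i, (i \notin J) ==> (s i == i)].
  have HJ : forall i, i \in J -> s i \in J.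
    move=> i iJ; apply/negPn/negP => siJ.
    have := implyP (forallP hfx (s i)) siJ => /eqP /perm_inj E.
    by move: siJ; rewrite E iJ.
  rewrite (bigID (fun i => i \in J)) /= [X in _ = _ * X](bigID (fun i => i \in J)) /=.
  rewrite [X in _ = _ * (_ * X)]big1; last first.
    by move=> i iJ; rewrite mxE (negbTE iJ) (eqP (implyP (forallP hfx i) iJ)) eqxx.
  rewrite mulr1 mulrC; congr (_ * _).
  - apply: eq_big => [i|i iJ]; first by rewrite inE.
    by rewrite (negbTE iJ) (eqP (implyP (forallP hfx i) iJ)) eqxx mul1r.
  - by apply: eq_bigr => i iJ; rewrite iJ mxE iJ HJ.
move/forallPn => [i0]; rewrite negb_imply => /andP [i0J si0].
rewrite (bigD1 i0) //= [X in _ = _ * X](bigD1 i0) //= (negbTE i0J) mxE (negbTE i0J).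
by rewrite eq_sym (negbTE si0) !mul0r mulr0.
Qed.

Lemma det_expand (R : comPzRingType) n (M : 'M[R]_n) (x : 'I_n -> R) :
  \det (M + \matrix_(a,b) ((a == b)%:R * x a)) =
  \sum_(S : {set 'I_n}) (\prod_(a in ~: S) x a) * \det (PM S M).
Proof.
rewrite /determinant.
under eq_bigr => s _.
  rewrite (eq_bigr (fun i => M i (s i) + (i == s i)%:R * x i)); last by move=> i _; rewrite !mxE.
  rewrite bigA_distr big_distrr /=.
  over.
rewrite exchange_big /=; apply: eq_bigr => J _.
rewrite big_distrr /=; apply: eq_bigr => s _.
by rewrite prod_split mulrCA.
Qed.
Lemma rank_scale_le (F : fieldType) m n (a : F) (B : 'M[F]_(m, n)) :
  (\rank (a *: B) <= \rank B)%N.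
Proof. by rewrite -mul_scalar_mx mxrankM_maxr. Qed.

Lemma rank_diag_le (F : fieldType) n (d : 'rV[F]_n) :
  (\rank (diag_mx d) <= #|[set i | d ord0 i != 0%R]|)%N.
Proof.
rewrite diag_mx_sum_delta (bigID (fun i => i \in [set i | d ord0 i != 0%R])) /=.
rewrite [X in (_ + X)%R]big1 ?addr0; last first.
  by move=> i; rewrite inE negbK => /eqP ->; rewrite scale0r.
rewrite -sum1_card.
elim/big_rec2: _ => [|i k Y _ IH]; first by rewrite mxrank0.
apply: leq_trans (mxrank_add _ _) _; rewrite leq_add //.
by apply: leq_trans (rank_scale_le _ _) _; rewrite mxrank_delta.
Qed.

Lemma PM_diag (F : fieldType) n (S : {set 'I_n}) (Q : 'M[F]_n) :
  PM S Q = diag_mx (\row_a (a \in S)%:R) *m Q *m diag_mx (\row_a (a \in S)%:R)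
           + diag_mx (\row_a (a \notin S)%:R).
Proof.
apply/matrixP => a b; rewrite mul_diag_mx mul_mx_diag !mxE.
case: (boolP (a \in S)) => aS; case: (boolP (b \in S)) => bS /=;
  rewrite ?mul1r ?mulr1 ?mul0r ?mulr0 ?add0r ?addr0 ?mul0rn ?addr0 //.

Qed.

Lemma det_PM_rank (F : fieldType) n (S : {set 'I_n}) (Q : 'M[F]_n) :
  (\rank Q < #|S|)%N -> \det (PM S Q) = 0.
Proof.
move=> rQ; apply/eqP; apply/negPn/negP => dn0.
have : PM S Q \in unitmx by rewrite unitmxE unitfE.
move/mxrank_unit; rewrite PM_diag => E.
have : (n <= \rank Q + #|~: S|)%N.
  rewrite -{1}E; apply: leq_trans (mxrank_add _ _) _; apply: leq_add.
    by apply: leq_trans (mxrankM_maxl _ _) _; apply: mxrankM_maxr.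
  apply: leq_trans (rank_diag_le _) _; apply: subset_leq_card.
  by apply/subsetP => a; rewrite !inE mxE; case: (a \in S); rewrite ?eqxx ?oner_eq0.
rewrite -{1}(card_ord n) -(cardsC S); lia.

Qed.
Lemma enum_set_filter n (S : {set 'I_n}) : enum S = [seq x <- enum 'I_n | x \in S].
Proof. by rewrite -deprecated_filter_index_enum enumT. Qed.

Definition ltI n := fun a b : 'I_n => (a < b)%N.

Lemma ltI_trans n : transitive (@ltI n).
Proof. by move=> a b c; apply: ltn_trans. Qed.

Lemma ltI_irr n : irreflexive (@ltI n).
Proof. by move=> a; apply: ltnn. Qed.

Lemma sorted_enum_ord n : sorted (@ltI n) (enum 'I_n).
Proof.
by have := iota_ltn_sorted 0 n; rewrite -val_enum_ord sorted_map.
Qed.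

Lemma sorted_enum_set n (S : {set 'I_n}) : sorted (@ltI n) (enum S).
Proof. by rewrite enum_set_filter; apply: (sorted_filter (@ltI_trans n)); apply: sorted_enum_ord. Qed.

Lemma incr_inj r n (f : {ffun 'I_r -> 'I_n}) : incr_seq f -> injective f.
Proof.
move=> If k l E; apply: val_inj; case: (ltngtP k l) => // H.
- by have := implyP (forallP (forallP If k) l) H; rewrite E ltnn.
- by have := implyP (forallP (forallP If l) k) H; rewrite E ltnn.
Qed.

Definition hset r n (f : {ffun 'I_r -> 'I_n}) : {set 'I_n} := [set x in codom f].
Definition hfun r n (rn : (r <= n)%N) (S : {set 'I_n}) : {ffun 'I_r -> 'I_n} :=
  [ffun k : 'I_r => nth (widen_ord rn k) (enum S) k].

Lemma hfun_incr r n (rn : (r <= n)%N) (S : {set 'I_n}) :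
  #|S| = r -> incr_seq (hfun rn S).
Proof.
move=> cS; apply/forallP => k; apply/forallP => l; apply/implyP => kl.
rewrite !ffunE (set_nth_default (widen_ord rn k) (widen_ord rn l)); last first.
  by rewrite -cardE cS.
apply: (sorted_ltn_nth (@ltI_trans n) _ (sorted_enum_set S)) => //;
  by rewrite inE -cardE cS.
Qed.

Lemma hsetK r n (rn : (r <= n)%N) (S : {set 'I_n}) :
  #|S| = r -> hset (hfun rn S) = S.
Proof.
move=> cS; apply/setP => x; rewrite inE -[x \in S]mem_enum; apply/idP/idP.
  by move=> H; have [k ->] := codomP H; rewrite ffunE mem_nth // -cardE cS.
move=> xS; have ir : (index x (enum S) < r)%N by rewrite -cS cardE index_mem.
rewrite (_ : x = hfun rn S (Ordinal ir)) ?codom_f //.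
by rewrite ffunE /= nth_index.
Qed.

Lemma hfunK r n (rn : (r <= n)%N) (f : {ffun 'I_r -> 'I_n}) :
  incr_seq f -> hfun rn (hset f) = f.
Proof.
move=> If.
have E : enum (hset f) = codom f.
  apply: (irr_sorted_eq (@ltI_trans n) (@ltI_irr n)).
  - exact: sorted_enum_set.
  - rewrite codomE; apply: (homo_sorted (e := @ltI r)).
      by move=> k l kl; apply: (implyP (forallP (forallP If k) l)).
    exact: sorted_enum_ord.
  by move=> x; rewrite mem_enum inE.
apply/ffunP => k; rewrite ffunE E codomE (nth_map k) ?size_enum_ord //.
by rewrite nth_ord_enum.
Qed.

Lemma card_hset r n (f : {ffun 'I_r -> 'I_n}) : injective f -> #|hset f| = r.
Proof. by move=> fi; rewrite cardsE card_codom // card_ord. Qed.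


Lemma det_mxsub_perm (R : comPzRingType) p n (g : 'I_p -> 'I_n) (X : 'M[R]_n) :
  p = n -> injective g -> \det (mxsub g g X) = \det X.
Proof.
move=> epn; subst p => ginj; set s := perm ginj.
have -> : mxsub g g X = row_perm s (col_perm s X).
  by apply/matrixP => i j; rewrite !mxE !permE.
rewrite row_permE col_permE !det_mulmx !det_perm odd_permV.
by case: (perm.odd_perm s); rewrite /= ?expr0 ?expr1 ?mul1r ?mulr1 ?mulrN1 ?mulN1r ?opprK.
Qed.

Lemma det_mxsub_PM (R : comPzRingType) r n (f : 'I_r -> 'I_n) (Q : 'M[R]_n) :
  injective f -> \det (mxsub f f Q) = \det (PM [set x in codom f] Q).
Proof.
move=> finj.
have rn : (r <= n)%N by have := leq_card f finj; rewrite !card_ord.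
set S := [set x in codom f].
have cS : #|~: S| = (n - r)%N.
  have := cardsC S; rewrite cardsE card_codom // card_ord => E.
  move: E; rewrite card_ord; lia.
pose c (j : 'I_(n - r)) : 'I_n := enum_val (cast_ord (esym cS) j).
have cnS j : c j \notin S.
  by have := enum_valP (cast_ord (esym cS) j); rewrite inE.
have fS a : f a \in S by rewrite inE codom_f.
have cinj : injective c.
  by move=> j j' /enum_val_inj /cast_ord_inj.
pose g (x : 'I_(r + (n - r))) : 'I_n :=
  match split x with inl a => f a | inr b => c b end.
have ginj : injective g.
  move=> x y; rewrite -(splitK x) -(splitK y) /g !unsplitK.
  case: (split x) => [a|b]; case: (split y) => [a'|b'] /= H.
  - by rewrite (finj _ _ H).
  - by move: (fS a); rewrite H (negbTE (cnS b')).
  - by move: (fS a'); rewrite -H (negbTE (cnS b)).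
  - by rewrite (cinj _ _ H).
rewrite -(det_mxsub_perm (PM S Q) _ ginj); last by rewrite subnKC.
have -> : mxsub g g (PM S Q) = block_mx (mxsub f f Q) 0 0 1%:M.
  apply/matrixP => x y; rewrite -(splitK x) -(splitK y) mxE /g !unsplitK.
  case: (split x) => [a|b]; case: (split y) => [a'|b'] /=;
    rewrite ?block_mxEul ?block_mxEur ?block_mxEdl ?block_mxEdr !mxE
      ?fS ?(negbTE (cnS _)) //.
  - by case: eqP => // E; move: (cnS b); rewrite E fS.
  - by rewrite (inj_eq cinj).
by rewrite det_ublock det1 mulr1.
Qed.

Lemma sum_incr (R : comPzRingType) r n (Q : 'M[R]_n) (Pset : pred {set 'I_n}) :
  (r <= n)%N ->
  \sum_(f : {ffun 'I_r -> 'I_n} | incr_seq f && Pset (hset f)) \det (mxsub f f Q)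
  = \sum_(S : {set 'I_n} | (#|S| == r) && Pset S) \det (PM S Q).
Proof.
move=> rn.
rewrite [RHS](reindex_onto (@hset r n) (hfun rn)); last first.
  by move=> S /andP [/eqP cS _]; rewrite hsetK.
apply: eq_big => [f|f /andP [If _]]; last by rewrite det_mxsub_PM //; apply: incr_inj.
case: (boolP (incr_seq f)) => If /=.
  by rewrite card_hset ?hfunK ?eqxx ?andbT //; apply: incr_inj.
case cf: (#|hset f| == r) => //=.
case: eqP; rewrite ?andbF // => E.
by move: If; rewrite -E hfun_incr //; apply/eqP.
Qed.
Definition colrep (R : pzRingType) n (M : 'M[R]_n) (i : 'I_n) (c : 'cV[R]_n) : 'M[R]_n :=
  \matrix_(k, l) (if l == i then c k ord0 else M k l).

Lemma rank_colrep (F : fieldType) n (Q : 'M[F]_n) i (v : 'cV[F]_n) :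
  (\rank (colrep Q i v) <= (\rank Q).+1)%N.
Proof.
have -> : colrep Q i v = Q *m diag_mx (\row_b (b != i)%:R) + v *m delta_mx ord0 i.
  apply/matrixP => a b; rewrite mul_mx_diag !mxE big_ord1 !mxE eqxx /=.
  by case: eqP => _; rewrite ?mulr1 ?mulr0 ?addr0 ?add0r.
apply: leq_trans (mxrank_add _ _) _.
have -> : (\rank Q).+1 = (\rank Q + 1)%N by rewrite addn1.
rewrite leq_add //.
  exact: mxrankM_maxl.
by apply: leq_trans (mxrankM_maxr _ _) _; rewrite mxrank_delta.
Qed.

Lemma colrep_poly (F : fieldType) n (D V : 'M[F]_n) a l :
  colrep (map_mx polyC D +
          \matrix_(c, d) ((c == d)%:R * (if c \in (set0 : {set 'I_n}) then 0 else 'X)))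
         a (col l (map_mx polyC V)) =
  map_mx polyC (colrep D a (col l V)) +
  \matrix_(c, d) ((c == d)%:R * (if c \in [set a] then 0 else 'X)).
Proof.
apply/matrixP => c d; rewrite !mxE in_set0 inE.
case: (eqVneq d a) => [->|da]; case: (eqVneq c a) => [->|ca] //=;
  rewrite ?eqxx ?mulr0 ?addr0 ?mul1r //.
- by rewrite mul0r addr0.
- by rewrite eq_sym (negbTE da) mul0r addr0.
Qed.

Lemma spec_det (C : numClosedFieldType) n (D : 'M[C]_n) : D \is normalmx ->
  exists2 mu : 'rV[C]_n,
    \det (map_mx polyC D + 'X%:M) = \prod_i ('X + (mu ord0 i)%:P) &
    (\rank D <= \rank (diag_mx mu))%N.
Proof.
move/orthomx_spectralP => E.
set U := spectralmx D in E; set mu := spectral_diag D in E.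
have Uu : U \in unitmx by apply: spectral_unit.
exists mu; last first.
  by rewrite E; apply: leq_trans (mxrankM_maxl _ _) _; apply: mxrankM_maxr.
have -> : map_mx polyC D + 'X%:M =
    map_mx polyC (invmx U) *m (map_mx polyC (diag_mx mu) + 'X%:M) *m map_mx polyC U.
  rewrite mulmxDr mulmxDl -!map_mxM -E; congr (_ + _).
  rewrite mul_mx_scalar -scalemxAl -map_mxM mulVmx // map_mx1 scalemx1 //.
rewrite !det_mulmx mulrC mulrA -det_mulmx -map_mxM mulmxV // map_mx1 det1 mul1r.
have -> : map_mx polyC (diag_mx mu) + 'X%:M = diag_mx (\row_i ('X + (mu ord0 i)%:P)).
  apply/matrixP => a b; rewrite !mxE; case: eqP => [->|]; rewrite /= ?mulr1n ?mulr0n ?addr0 ?add0r ?polyC0 //.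
  by rewrite addrC.
by rewrite det_diag; apply: eq_bigr => i _; rewrite mxE.
Qed.

Lemma coef_prod_lin (F : fieldType) n (mu : 'rV[F]_n) :
  (\prod_i ('X + (mu ord0 i)%:P))`_#|[set i | mu ord0 i == 0]| != 0.
Proof.
rewrite (bigID (fun i => i \in [set i | mu ord0 i == 0])) /=.
rewrite (eq_bigr (fun _ => 'X)); last by move=> i; rewrite inE => /eqP ->; rewrite addr0.
rewrite prodr_const coefXnM ltnn subnn -horner_coef0 horner_prod.
apply/prodf_neq0 => i; rewrite inE => ni.
by rewrite hornerD hornerX hornerC add0r.
Qed.
Lemma cramer (R : comPzRingType) n (M V : 'M[R]_n) i j :
  (\adj M *m V) i j = \det (colrep M i (col j V)).
Proof.
rewrite mxE (expand_det_col _ i); apply: eq_bigr => k _.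
rewrite !mxE eqxx mulrC; congr (_ * _).
rewrite /cofactor; congr (_ * \det _).
by apply/matrixP => a b; rewrite !mxE eq_sym (negbTE (neq_lift _ _)).
Qed.

Lemma PM_map (F : fieldType) n (S : {set 'I_n}) (Q : 'M[F]_n) :
  PM S (map_mx polyC Q) = map_mx polyC (PM S Q).
Proof.
apply/matrixP => a b; rewrite !mxE.
by case: (a \in S); case: (b \in S); case: (a == b); rewrite ?mxE /= ?polyC0 ?polyC1.
Qed.

Lemma coef_det_gen (F : fieldType) n (Q : 'M[F]_n) (J : {set 'I_n}) k :
  (\det (map_mx polyC Q +
         \matrix_(a, b) ((a == b)%:R * (if a \in J then 0 else 'X))))`_k =
  \sum_(S : {set 'I_n} | (J \subset S) && (#|~: S| == k)) \det (PM S Q).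
Proof.
rewrite det_expand coef_sum [RHS]big_mkcond; apply: eq_bigr => S _.
rewrite PM_map det_map_mx.
case: (boolP (J \subset S)) => JS /=.
  rewrite (eq_bigr (fun _ => 'X)); last first.
    by move=> a; rewrite inE => aS; case: ifP => // aJ; move: aS; rewrite (subsetP JS).
  by rewrite prodr_const mulrC mul_polyC coefZ coefXn eq_sym; case: eqP; rewrite ?mulr1 ?mulr0.
have [a aJ aS] : exists2 a, a \in J & a \notin S.
  by move/subsetPn: JS.
by rewrite (bigD1 a) ?inE //= aJ mul0r mul0r coef0.
Qed.

Lemma ctmxM (C : numClosedFieldType) m n p (X : 'M[C]_(m, n)) (Y : 'M[C]_(n, p)) :
  ctmx (X *m Y) = ctmx Y *m ctmx X.
Proof. by rewrite /ctmx map_mxM trmx_mul. Qed.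

Lemma ctmxK (C : numClosedFieldType) m n (X : 'M[C]_(m, n)) : ctmx (ctmx X) = X.
Proof. by apply/matrixP => a b; rewrite /ctmx !mxE conjCK. Qed.

Lemma cardsC' n (S : {set 'I_n}) : #|~: S| = (n - #|S|)%N.
Proof. by have := cardsC S; rewrite card_ord; lia. Qed.

Lemma card_le_sub n (X : {set 'I_n}) r : (r <= #|X|)%N -> (#|~: X| <= n - r)%N.
Proof. by rewrite cardsC'; apply: leq_sub2l. Qed.

Unset Implicit Arguments.

Theorem corollary2p2 (C : numClosedFieldType) (m n r : nat)
    (A : 'M[C]_(m, n)) (Aplus : 'M[C]_(n, m)) :
  \rank A = r ->
  ((r < minn m n)%N \/ (r = m /\ (m < n)%N)) ->
  is_MP_inverse A Aplus ->
  forall i j : 'I_n,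
    (Aplus *m A) i j = p_entry r A i j / d_r r (ctmx A *m A).
Proof.
move=> rA hyp [P1 P2 P3 P4] i j.
set D := ctmx A *m A.
set P := Aplus *m A.
have rn : (r < n)%N.
  by case: hyp => [H|[-> //]]; apply: leq_trans H (geq_minr m n).
have rD : \rank D = r.
  apply/eqP; rewrite eqn_leq; apply/andP; split.
    by rewrite -rA; apply: mxrankM_maxr.
  have EA : A = ctmx Aplus *m D by rewrite /D mulmxA -ctmxM P3 P1.
  by rewrite -rA {1}EA; apply: mxrankM_maxr.
have DP : D *m P = D by rewrite /D /P -mulmxA (mulmxA A) P1.
have PDY : P = D *m (Aplus *m ctmx Aplus).
  rewrite /P -P4 ctmxM -{1}P1 ctmxM P3 /D !mulmxA //.
pose M := map_mx polyC D +
  \matrix_(c, d) ((c == d)%:R * (if c \in (set0 : {set 'I_n}) then 0 else 'X)).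
have EM : M = map_mx polyC D + 'X%:M.
  by congr (_ + _); apply/matrixP => a b; rewrite !mxE in_set0 mulr_natl.
pose B k := map_mx (fun p : {poly C} => p`_k) (\adj M).
have coefDp (Z : 'M[{poly C}]_n) k a b :
    ((Z *m map_mx polyC D) a b)`_k = (map_mx (fun p : {poly C} => p`_k) Z *m D) a b.
  by rewrite !mxE coef_sum; apply: eq_bigr => l _; rewrite !mxE coefMC.
have key k : B k *m D + (if k is k'.+1 then B k' else 0) = ((\det M)`_k)%:M.
  have E1 : \adj M *m map_mx polyC D + 'X *: \adj M = (\det M)%:M.
    by rewrite -mul_mx_scalar -mulmxDr -EM mul_adj_mx.
  apply/matrixP => a b.
  move/matrixP: E1 => /(_ a b) /(congr1 (fun p : {poly C} => p`_k)).
  have E2 : ('X *: \adj M) a b = 'X * \adj M a b by rewrite mxE.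
  have E3 : ((\det M)%:M : 'M_n) a b = \det M *+ (a == b) by rewrite mxE.
  rewrite mxE coefD coefDp E2 E3 coefXM coefMn => H.
  rewrite [RHS]mxE -H.
  by case: k {H} => [|k] /=; rewrite !mxE ?addr0.
have cM k : (\det M)`_k = \sum_(S : {set 'I_n} | #|~: S| == k) \det (PM S D).
  by rewrite coef_det_gen; apply: eq_bigl => S; rewrite sub0set.
have BD k a b : (B k *m D) a b =
    \sum_(S : {set 'I_n} | ([set a] \subset S) && (#|~: S| == k))
       \det (PM S (colrep D a (col b D))).
  by rewrite -coefDp cramer /M colrep_poly coef_det_gen.
have Bk k a l : (B k) a l =
    \sum_(S : {set 'I_n} | ([set a] \subset S) && (#|~: S| == k))
       \det (PM S (colrep D a (col l 1%:M))).
  rewrite mxE -[\adj M]mulmx1 -(map_mx1 polyC) cramer /M colrep_poly.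
  by rewrite coef_det_gen.
pose s := (n - r)%N.
have s_pos : (0 < s)%N by rewrite /s subn_gt0.
have c_lt k : (k < s)%N -> (\det M)`_k = 0.
  move=> ks; rewrite cM; apply: big1 => S /eqP cS; apply: det_PM_rank.
  rewrite rD; move: cS; rewrite cardsC'; move: ks; rewrite /s; lia.
have c_s : (\det M)`_s = d_r r D.
  rewrite cM /d_r.
  rewrite (eq_bigl (fun f : {ffun 'I_r -> 'I_n} => incr_seq f && predT (hset f)));
    last by move=> f; rewrite andbT.
  rewrite /princ_sub sum_incr; last exact: ltnW.
  apply: eq_bigl => S; rewrite andbT cardsC' /s.
  have := subset_leq_card (subsetT S); rewrite cardsT card_ord => Sn.
  apply/eqP/eqP; lia.
have B_low k : (k.+2 <= s)%N -> B k = 0.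
  move=> ks; apply/matrixP => a l; rewrite Bk mxE; apply: big1 => S /andP [_ /eqP cS].
  apply: det_PM_rank; apply: leq_ltn_trans (rank_colrep _ _ _) _.
  rewrite rD; move: cS; rewrite cardsC'; move: ks; rewrite /s; lia.
have B1D : B s.-1 *m D = 0.
  have := key s.-1; case E: s.-1 => [|k'] /=.
    by rewrite addr0 c_lt ?E // => ->; rewrite raddf0.
  rewrite (B_low k'); last by move: E; lia.
  rewrite addr0 c_lt; last by move: E; lia.
  by move=> ->; rewrite raddf0.
have Bs : B s *m D + B s.-1 = (d_r r D)%:M.
  by have := key s; rewrite c_s -(prednK s_pos).
have main : B s *m D = d_r r D *: P.
  have -> : B s *m D = B s *m D *m P by rewrite -mulmxA DP.
  have -> : B s *m D = (d_r r D)%:M - B s.-1 by rewrite -Bs addrK.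
  rewrite mulmxBl mul_scalar_mx.
  have -> : B s.-1 *m P = 0 by rewrite PDY (mulmxA (B s.-1) D) B1D mul0mx.
  by rewrite subr0.
have pE : p_entry r A i j = (B s *m D) i j.
  rewrite BD /p_entry -/D.
  rewrite (eq_bigl (fun f : {ffun 'I_r -> 'I_n} =>
      incr_seq f && (fun S : {set 'I_n} => i \in S) (hset f)));
    last by move=> f; rewrite /hset inE.
  rewrite /princ_sub (@sum_incr _ r n (col_replace D i (col j D)) (fun S => i \in S));
    last exact: ltnW.
  apply: eq_big => [S|S _]; last by [].
  rewrite sub1set cardsC' /s andbC.
  have := subset_leq_card (subsetT S); rewrite cardsT card_ord => Sn.
  congr (_ && _); apply/eqP/eqP; lia.
have dn0 : d_r r D != 0.
  have Dn : D \is normalmx.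
    apply/normalmxP.
    have E : ctmx D = D by rewrite /D ctmxM ctmxK.
    have -> : (D ^t* )%sesqui = D.
      apply/matrixP => a b; have := congr1 (fun X : 'M_n => X a b) E.
      by rewrite /ctmx !mxE.
    by [].
  have [mu Edet rk] := spec_det Dn.
  have := coef_prod_lin mu; rewrite -Edet -EM => Hz.
  set z := #|[set i | mu ord0 i == 0]|.
  have zs : (z <= s)%N.
    rewrite /z (_ : [set i | mu ord0 i == 0] = ~: [set i | mu ord0 i != 0]); last first.
      by apply/setP => x; rewrite !inE negbK.
    apply: card_le_sub; rewrite -rD; apply: leq_trans rk (rank_diag_le mu).
  have zE : z = s.
    apply/eqP; rewrite eqn_leq zs /= leqNgt; apply/negP => /c_lt E.
    by move: Hz; rewrite -/z E eqxx.
  by rewrite -c_s -zE.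
rewrite pE main.
have -> : (d_r r D *: P) i j = d_r r D * P i j by rewrite mxE.
by rewrite mulrAC divff // mul1r.
Qed.
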